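(* Let $S$ be a numerical semigroup with minimal generating set $P$, $D=S^*+S^*$, and $G=G(S)=(V,E)$. Then $|V\cap D|\ge\deg(u)$ for every $u\in V\cap D$. Moreover, if $V\cap D=\{u\}$, then $N_G(u)=\{x\}$ for some $x\in V\cap P$, and $u=2x$.
   Context: A numerical semigroup is a subset $S\subseteq\mathbb N$ containing $0$, closed under addition, with finite complement; $S^*=S\setminus\{0\}$, $m=\min S^*$, $P=S^*\setminus D$. $X=\{s\in S^*: s-m\notin S\}$. The graph $G(S)$ has edge set all subsets $\{x,y\}\subseteq X$ ($x=y$ allowed) with $x+y\in X$, and vertex set $V$ the endvertices of these edges. $N_G(x)=\{y\in X: x+y\in X\}$ and $\deg(x)=|N_G(x)|$. *)

(* Defs.v *)
From mathcomp Require Import all_boot.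
Set Implicit Arguments. Unset Strict Implicit. Unset Printing Implicit Defensive.

Definition numerical_semigroup (S : pred nat) : Prop :=
  [/\ 0 \in S,
      (forall a b, a \in S -> b \in S -> a + b \in S)
    & exists N, forall n, N <= n -> n \in S].

Definition Sstar (S : pred nat) (n : nat) : bool := (0 < n) && (n \in S).

Definition is_multiplicity (S : pred nat) (m : nat) : Prop :=
  Sstar S m /\ (forall s, Sstar S s -> m <= s).

(* D = S^* + S^* : n = a + b with a, b ∈ S^*  (necessarily a <= n) *)
Definition inD (S : pred nat) (n : nat) : bool :=
  [exists a : 'I_n.+1, Sstar S a && Sstar S (n - a) && (a + (n - a) == n)].

(* P = S^* \ D  (the minimal generating set) *)
Definition inP (S : pred nat) (n : nat) : bool := Sstar S n && ~~ inD S n.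

Definition inX (S : pred nat) (m s : nat) : bool := Sstar S s && (s - m \notin S).

Definition inN (S : pred nat) (m x y : nat) : bool := inX S m y && inX S m (x + y).

(* V = endvertices of edges {x,y} ⊆ X (x = y allowed) with x + y ∈ X *)
(* Since N_G(v) ⊆ X, it suffices to search y below any bound B of X;
   the theorem assumes every element of X is < B, so this is exactly V. *)
Definition inV (S : pred nat) (m B v : nat) : bool :=
  inX S m v && has (inN S m v) (iota 0 B).

(* Cardinality of a subset of [0, B): used with B an upper bound for X,
   so that it is the true cardinality of the (finite) set. *)
Definition card_below (B : nat) (p : pred nat) : nat := count p (iota 0 B).

(* Main.v *)
Require Import Defs.
From mathcomp Require Import all_boot.
From mathcomp Require Import zify.
Set Implicit Arguments. Unset Strict Implicit.

Section Aux.
Variables (S : pred nat) (m B : nat).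
Hypothesis NS : numerical_semigroup S.
Hypothesis HM : is_multiplicity S m.
Hypothesis HB : forall x, inX S m x -> x < B.

Lemma addS a b : a \in S -> b \in S -> a + b \in S.
Proof. by move: NS; rewrite /numerical_semigroup => -[_ H _]; apply: H. Qed.

Lemma SstarD a b : Sstar S a -> Sstar S b -> Sstar S (a + b).
Proof.
rewrite /Sstar => /andP[a0 aS] /andP[b0 bS]; rewrite addS // andbT; lia.
Qed.

Lemma summand t r : inX S m (t + r) -> Sstar S t -> r \in S -> inX S m t.
Proof.
rewrite /inX => /andP[_ H] Ht Hr; rewrite Ht /=.
apply/negP => Htm; move/negP: H; apply.
have mt : m <= t by case: HM => _; apply.
have -> : t + r - m = (t - m) + r by lia.
exact: addS.
Qed.

Lemma inDP n : reflect (exists a b, [/\ Sstar S a, Sstar S b & a + b = n]) (inD S n).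
Proof.
apply: (iffP existsP).
  case=> a /andP[/andP[Ha Hb] /eqP E]; exists (val a), (n - a); split=> //.
case=> a [b [Ha Hb E]].
have ltan : a < n.+1 by lia.
exists (Ordinal ltan) => /=.
have -> : n - a = b by lia.
by rewrite Ha Hb /= E.
Qed.

Lemma shift u a b y : Sstar S a -> Sstar S b -> a + b = u -> inN S m u y ->
  inV S m B (b + y) && inD S (b + y).
Proof.
move=> Ha Hb E /andP[Xy Xuy].
have Sy : Sstar S y by case/andP: Xy.
have Sby : Sstar S (b + y) := SstarD Hb Sy.
have e1 : u + y = (b + y) + a by lia.
have Xby : inX S m (b + y).
  by apply: (summand (r := a)); rewrite -?e1 //; case/andP: Ha.
have Xa : inX S m a.
  have e2 : a + (b + y) = u + y by lia.
  apply: (summand (r := b + y)); first by rewrite e2.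
    done.
  by case/andP: Sby.
apply/andP; split.
  rewrite /inV Xby /=; apply/hasP; exists a.
    by rewrite mem_iota /= add0n; apply: HB.
  by apply/andP; split => //; rewrite -e1.
by apply/inDP; exists b, y.
Qed.

End Aux.

Theorem proposition4p15 (S : pred nat) (m B : nat) :
  numerical_semigroup S ->
  is_multiplicity S m ->
  (forall x, inX S m x -> x < B) ->
  (forall u, inV S m B u -> inD S u ->
     card_below B (inN S m u)
       <= card_below B (fun v => inV S m B v && inD S v))
  /\
  (forall u, (forall v, (inV S m B v && inD S v) = (v == u)) ->
     exists x, [/\ inV S m B x, inP S x,
                  (forall y, inN S m u y = (y == x)) & u = 2 * x]).
Proof.
move=> NS HM HB; split.
  move=> u _ /inDP[a [b [Ha Hb E]]].
  rewrite /card_below -!size_filter.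
  rewrite -(size_map (fun y => b + y)).
  apply: uniq_leq_size.
    rewrite map_inj_uniq; first by rewrite filter_uniq // iota_uniq.
    by move=> x y /eqP; rewrite eqn_add2l => /eqP.
  move=> z /mapP[y]; rewrite mem_filter => /andP[Ny _] ->.
  have H := shift NS HM HB Ha Hb E Ny.
  rewrite mem_filter H mem_iota /= add0n.
  by apply: HB; case/andP: H => /andP[].
move=> u Hu.
have /andP[Vu Du] : inV S m B u && inD S u by rewrite Hu.
case/inDP: Du => a [b [Ha Hb E]].
have key : forall y, inN S m u y -> y = a /\ a = b.
  move=> y Ny.
  have /eqP e1 : b + y == u by rewrite -Hu (shift NS HM HB Ha Hb E Ny).
  have E' : b + a = u by rewrite addnC.
  have /eqP e2 : a + y == u by rewrite -Hu (shift NS HM HB Hb Ha E' Ny).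
  lia.
case/andP: Vu => Xu /hasP[y0 _ Ny0].
have [ya ab] := key y0 Ny0.
subst y0 b.
have Xa : inX S m a by case/andP: Ny0.
have Ea : u = 2 * a by lia.
exists a; split.
- rewrite /inV Xa /=; apply/hasP; exists a.
    by rewrite mem_iota /= add0n; apply: HB.
  by rewrite /inN Xa /= E.
- rewrite /inP Ha /=; apply/negP => Da.
  have /eqP au : a == u by rewrite -Hu Da andbT /inV Xa /=; apply/hasP; exists a;
    [rewrite mem_iota /= add0n; apply: HB | rewrite /inN Xa /= E].
  move/andP: Ha => [a0 _]; lia.
- move=> y; apply/idP/eqP; first by move/key => [].
  by move=> ->.
- exact: Ea.
Qed.
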